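(* Let $q$ be a prime power and let $C_1\subseteq\mathbb{F}_q^n$ and $C_2\subseteq\mathbb{F}_q^n$ be linear codes of dimensions $k_1$ and $k_2$ (with minimum distances $d_1,d_2$) such that $C_2^\perp\subseteq C_1$, where $C_2^\perp$ is the dual of $C_2$ with respect to the standard bilinear form on $\mathbb{F}_q^n$. Let $k=k_1+k_2-n$ and let $\mathcal{C}\subseteq(\mathbb{C}^q)^{\otimes n}$ be the associated CSS code. Then there exists a quantum circuit encoding $\mathcal{C}$, i.e. a unitary $U$ on $(\mathbb{C}^q)^{\otimes n}$ together with a set $I\subseteq\{1,\dots,n\}$ of $k$ qudit positions such that $U$ maps the subspace $\mathrm{span}\{|x\rangle : x\in\mathbb{F}_q^n,\ x_j=0 \text{ for all } j\notin I\}$ onto $\mathcal{C}$, which is a product of $n-k_2$ gates $F$, at most $A:=k_1n-\binom{k_1+1}{2}$ gates $\mathrm{ADD}$, and at most $A+(n-1)$ multiplication gates $M_\gamma$.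
   Context: Let $q=p^m$ with $p$ prime, $\omega=\exp(2\pi i/p)$, and for $\alpha\in\mathbb{F}_q$ let $\mathrm{tr}(\alpha)=\sum_{i=0}^{m-1}\alpha^{p^i}\in\mathbb{F}_p$ (identified with $\mathbb{Z}/p\mathbb{Z}$ in exponents of $\omega$). A qudit is $\mathbb{C}^q$ with orthonormal basis $\{|x\rangle: x\in\mathbb{F}_q\}$; $n$ qudits have basis $|x\rangle=|x_1\rangle\otimes\cdots\otimes|x_n\rangle$, $x\in\mathbb{F}_q^n$. Gates (acting on the indicated qudits, identity elsewhere): $M_\gamma=\sum_{y}|\gamma y\rangle\langle y|$ for $\gamma\in\mathbb{F}_q\setminus\{0\}$; $F=\frac{1}{\sqrt q}\sum_{x,z\in\mathbb{F}_q}\omega^{\mathrm{tr}(xz)}|z\rangle\langle x|$; $\mathrm{ADD}^{(a,b)}=\sum_{x,y}|x\rangle_a|x+y\rangle_b\langle y|_b\langle x|_a$ on an ordered pair of distinct qudits $(a,b)$. The CSS code associated with $C_1,C_2$ (with $C_2^\perp\subseteq C_1$) is the subspace of $(\mathbb{C}^q)^{\otimes n}$ spanned by the states $|\psi_w\rangle=|C_2^\perp|^{-1/2}\sum_{c\in C_2^\perp}|c+w\rangle$ for $w\in C_1$; it has dimension $q^{k}$ with $k=k_1+k_2-n$. *)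

(* Defs.v *)
From HB Require Import structures.
From mathcomp Require Import all_boot all_order all_algebra all_field.
Set Implicit Arguments. Unset Strict Implicit. Unset Printing Implicit Defensive.
Import Order.TTheory GRing.Theory Num.Theory.
Local Open Scope ring_scope.

Section Qudits.
Variables (F : finFieldType) (n : nat).

(* q = #|F| = p ^ m with p the characteristic *)
Definition qsz : nat := #|F|.
Definition pch : nat := pdiv #|F|.
Definition mdeg : nat := logn pch #|F|.

Definition trF (a : F) : F := \sum_(i < mdeg) a ^+ (pch ^ i).

(* the representative in {0,...,p-1} of tr(a) in the prime field *)
Definition trN (a : F) : nat :=
  if [pick k : 'I_pch | (k%:R : F) == trF a] is Some k then val k else 0%N.

(* omega = exp(2 pi i / p); p.-root (-1) = exp(i pi / p) in algC *)
Definition omega : algC := (pch.-root (-1)) ^+ 2.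

Notation cfg := 'rV[F]_n.
Definition N : nat := #|{: cfg}|.

Definition ket (x : cfg) : 'rV[algC]_N := delta_mx 0 (enum_rank x).

Definition upd (y : cfg) (a : 'I_n) (c : F) : cfg :=
  \row_j (if j == a then c else y 0 j).

(* operator with amplitude g y x = <x| G |y>; acts on row vectors by v *m G,
   so that  ket y *m opmx g = \sum_x g y x *: ket x *)
Definition opmx (g : cfg -> cfg -> algC) : 'M[algC]_N :=
  \matrix_(i, j) g (enum_val i) (enum_val j).

Definition ampM (gam : F) (a : 'I_n) (y x : cfg) : algC :=
  (x == upd y a (gam * y 0 a))%:R.
(* F on qudit a : |y> -> q^{-1/2} sum_z omega^{tr(y_a z)} |.. z ..> *)
Definition ampF (a : 'I_n) (y x : cfg) : algC :=
  (x == upd y a (x 0 a))%:R * omega ^+ trN (y 0 a * x 0 a) / sqrtC (qsz%:R).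
Definition ampADD (a b : 'I_n) (y x : cfg) : algC :=
  (x == upd y b (y 0 a + y 0 b))%:R.

Inductive gate : Type :=
  | GF of 'I_n
  | GM of F & 'I_n
  | GADD of 'I_n & 'I_n.

Definition gate_wf (g : gate) : bool :=
  match g with
  | GF _ => true
  | GM gam _ => gam != 0
  | GADD a b => a != b
  end.

Definition gate_mx (g : gate) : 'M[algC]_N :=
  match g with
  | GF a => opmx (ampF a)
  | GM gam a => opmx (ampM gam a)
  | GADD a b => opmx (ampADD a b)
  end.

Definition isF (g : gate) := if g is GF _ then true else false.
Definition isM (g : gate) := if g is GM _ _ then true else false.
Definition isADD (g : gate) := if g is GADD _ _ then true else false.

(* the circuit [:: g1; g2; ...] applies g1 first: U = G1 *m G2 *m ... *)
Definition circuit_mx (c : seq gate) : 'M[algC]_N :=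
  foldr (fun g acc => gate_mx g *m acc) 1%:M c.

Definition dotF (x y : cfg) : F := \sum_(j < n) x 0 j * y 0 j.
Definition in_dual (C : {vspace cfg}) (x : cfg) : bool :=
  [forall c : cfg, (c \in C) ==> (dotF x c == 0)].

Definition css_state (C2 : {vspace cfg}) (w : cfg) : 'rV[algC]_N :=
  (sqrtC (#|[pred x | in_dual C2 x]|%:R))^-1 *:
    \sum_(c : cfg | in_dual C2 c) ket (c + w).
Definition css_space (C1 C2 : {vspace cfg}) : 'M[algC]_N :=
  (\sum_(w : cfg | w \in C1) <<css_state C2 w>>)%MS.

Definition supp_in (I : {set 'I_n}) (x : cfg) : bool :=
  [forall j : 'I_n, (j \notin I) ==> (x 0 j == 0)].
Definition input_space (I : {set 'I_n}) : 'M[algC]_N :=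
  (\sum_(x : cfg | supp_in I x) <<ket x>>)%MS.

End Qudits.

(* Main.v *)
Require Import Defs.
From HB Require Import structures.
From mathcomp Require Import all_boot all_order all_algebra all_field.
Set Implicit Arguments. Unset Strict Implicit. Unset Printing Implicit Defensive.
From mathcomp Require Import zify ring.
Import Order.TTheory GRing.Theory Num.Theory.
Local Open Scope ring_scope.


Section Piv.
Variables (F : finFieldType) (n : nat).
Local Notation cfg := 'rV[F]_n.

Fixpoint tri (L : seq ('I_n * cfg)) : bool :=
  if L is (t, v) :: L' then [&& v 0 t != 0, all (fun pv : 'I_n * cfg => pv.2 0 t == 0) L' & tri L']
  else true.

Lemma span_zero_at (X : seq cfg) (t : 'I_n) (v : cfg) :
  all (fun x : cfg => x 0 t == 0) X -> v \in <<X>>%VS -> v 0 t = 0.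
Proof.
elim: X v => [|x X IH] v /=.
  by rewrite span_nil memv0 => _ /eqP ->; rewrite mxE.
move=> /andP[/eqP xt aX]; rewrite span_cons => /memv_addP[u /vlineP[k ->] [w wX ->]].
by rewrite !mxE xt (IH _ aX wX) mulr0 addr0.
Qed.

Lemma tri_free L : tri L -> free (map snd L).
Proof.
elim: L => [|[t v] L IH] /=; first by rewrite /free span_nil dimv0.
case/and3P=> vt aL tL; rewrite free_cons IH // andbT.
apply/negP => /(span_zero_at (X := map snd L) (t := t)) h.
by move: vt; rewrite h ?eqxx //; rewrite all_map.
Qed.

Lemma tri_cat L1 L2 : tri L1 -> tri L2 ->
  all (fun tv : 'I_n * cfg => all (fun pv : 'I_n * cfg => pv.2 0 tv.1 == 0) L2) L1 -> tri (L1 ++ L2).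
Proof.
elim: L1 => [|[t v] L1 IH] //= /and3P[-> a1 t1] t2 /andP[/= a2 a12].
by rewrite all_cat a1 a2 IH.
Qed.

Lemma tri_delta (s : seq 'I_n) (w : 'I_n -> cfg) :
  uniq s -> (forall p p', p \in s -> p' \in s -> w p 0 p' = (p == p')%:R) ->
  tri [seq (p, w p) | p <- s].
Proof.
elim: s => [|p s IH] //= /andP[ps us] hw.
have -> : tri [seq (p0, w p0) | p0 <- s].
  by apply: IH => // a b ha hb; apply: hw; rewrite inE ?ha ?hb orbT.
rewrite hw ?mem_head // eqxx oner_eq0 /= andbT.
rewrite all_map; apply/allP => p' hp' /=; rewrite hw ?inE ?hp' ?eqxx ?orbT //.
have -> : (p' == p) = false by apply/eqP => e; move: ps; rewrite -e hp'.
by rewrite eqxx.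
Qed.

Lemma sum_entry (I : finType) (Q : pred I) (a : I -> F) (v : I -> cfg) t :
  (\sum_(j | Q j) a j *: v j) 0 t = \sum_(j | Q j) a j * v j 0 t.
Proof. by rewrite summxE; apply: eq_bigr => j _; rewrite mxE. Qed.

Lemma nz_entry (v : cfg) : v != 0 -> exists i, v 0 i != 0.
Proof.
move=> nz; apply/existsP; apply: contraR nz => /existsPn h.
by apply/eqP/rowP => i; rewrite mxE; apply/eqP; move: (h i); rewrite negbK.
Qed.

Section Ext.
Variables (C : {vspace cfg}) (P : {set 'I_n}) (w : 'I_n -> cfg).
Hypothesis wC : forall p, p \in P -> w p \in C.
Hypothesis wd : forall p p', p \in P -> p' \in P -> w p 0 p' = (p == p')%:R.

Definition Inv (J : {set 'I_n}) (e : 'I_n -> cfg) :=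
  [/\ forall j, j \in J -> j \notin P,
      forall j, j \in J -> e j \in C,
      forall j p, j \in J -> p \in P -> e j 0 p = 0 &
      forall j j', j \in J -> j' \in J -> e j 0 j' = (j == j')%:R].

Definition famX (J : {set 'I_n}) (e : 'I_n -> cfg) :=
  [seq w p | p <- enum P] ++ [seq e j | j <- enum J].

Lemma famX_free J e : Inv J e -> free (famX J e) /\ size (famX J e) = (#|P| + #|J|)%N.
Proof.
case=> dJ eC e0 ed; split; last by rewrite size_cat !size_map -!cardE.
have -> : famX J e = map snd ([seq (p, w p) | p <- enum P] ++ [seq (j, e j) | j <- enum J]).
  by rewrite map_cat -!map_comp.
apply: tri_free; apply: tri_cat.
- by apply: tri_delta; [exact: enum_uniq | move=> p p'; rewrite !mem_enum; exact: wd].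
- by apply: tri_delta; [exact: enum_uniq | move=> p p'; rewrite !mem_enum; exact: ed].
rewrite all_map; apply/allP => p; rewrite mem_enum => pP /=.
rewrite all_map; apply/allP => j; rewrite mem_enum => jJ /=.
by rewrite e0.
Qed.

Lemma famX_sub J e : Inv J e -> (<<famX J e>> <= C)%VS.
Proof.
case=> dJ eC e0 ed; apply/span_subvP => x; rewrite mem_cat.
by case/orP => /mapP[p]; rewrite mem_enum => pP ->; [apply: wC | apply: eC].
Qed.

Lemma famX_bound J e : Inv J e -> (#|P| + #|J| <= \dim C)%N.
Proof.
move=> inv; have [fr sz] := famX_free inv.
by rewrite -sz -(eqP fr); apply: dimvS; apply: famX_sub.
Qed.

Lemma ext_lemma : exists (J : {set 'I_n}) (e : 'I_n -> cfg),
  Inv J e /\ (#|P| + #|J|)%N = \dim C /\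
  forall c, c \in C -> (forall p, p \in P -> c 0 p = 0) -> c = \sum_(j in J) c 0 j *: e j.
Proof.
suff H : forall m J e, Inv J e -> (\dim C - #|J| < m)%N -> exists (J : {set 'I_n}) (e : 'I_n -> cfg),
  Inv J e /\ (#|P| + #|J|)%N = \dim C /\
  forall c, c \in C -> (forall p, p \in P -> c 0 p = 0) -> c = \sum_(j in J) c 0 j *: e j.
  apply: (H (\dim C).+1 set0 (fun _ => 0)); last by rewrite cards0 subn0.
  by split=> [j|j|j p|j j']; rewrite inE.
elim=> // m IH J e inv hm.
have [rec|] := boolP [forall c : cfg, (c \in C) ==> [forall p in P, c 0 p == 0] ==>
   (c == \sum_(j in J) c 0 j *: e j)].
  have hrec : forall c, c \in C -> (forall p, p \in P -> c 0 p = 0) -> c = \sum_(j in J) c 0 j *: e j.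
    move=> c cC c0; move/forallP: rec => /(_ c); rewrite cC /=.
    have -> : [forall p in P, c 0 p == 0] by apply/forall_inP => p pP; rewrite c0.
    by move/eqP.
  exists J, e; split => //; split => //.
  apply/eqP; rewrite eqn_leq (famX_bound inv) /=.
  have [fr sz] := famX_free inv; rewrite -sz -(eqP fr); apply: dimvS.
  case: inv => dJ eC e0 ed.
  apply/subvP => c cC.
  pose c2 := c - \sum_(p in P) c 0 p *: w p.
  have c2C : c2 \in C.
    by rewrite memvB // memv_suml // => p pP; rewrite memvZ // wC.
  have c20 : forall p, p \in P -> c2 0 p = 0.
    move=> p pP; rewrite !mxE sum_entry (bigD1 p) //= wd // eqxx mulr1 big1 ?addr0 ?subrr //.
    by move=> p' /andP[p'P ne]; rewrite wd // (negPf ne) mulr0.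
  have -> : c = \sum_(p in P) c 0 p *: w p + \sum_(j in J) c2 0 j *: e j.
    by rewrite -hrec // /c2 addrC subrK.
  rewrite memvD // memv_suml // => x xP; rewrite memvZ // memv_span // mem_cat.
    by rewrite map_f ?mem_enum.
  by rewrite map_f ?mem_enum ?orbT.
case/forallPn => c; rewrite !negb_imply => /andP[cC /andP[/forall_inP c0 nc]].
case: inv => dJ eC e0 ed.
pose c1 := c - \sum_(j in J) c 0 j *: e j.
have c1C : c1 \in C by rewrite memvB // memv_suml // => j jJ; rewrite memvZ // eC.
have c1P : forall p, p \in P -> c1 0 p = 0.
  move=> p pP; rewrite !mxE sum_entry big1 ?subr0 ?(eqP (c0 p pP)) // => j jJ.
  by rewrite e0 // mulr0.
have c1J : forall j', j' \in J -> c1 0 j' = 0.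
  move=> j' j'J; rewrite !mxE sum_entry (bigD1 j') //= ed // eqxx mulr1 big1 ?addr0 ?subrr //.
  by move=> j /andP[jJ ne]; rewrite ed // (negPf ne) mulr0.
have [i ci] : exists i, c1 0 i != 0 by apply: nz_entry; rewrite subr_eq0.
have iP : i \notin P by apply: contra ci => iP; rewrite c1P.
have iJ : i \notin J by apply: contra ci => iJ; rewrite c1J.
pose c' := (c1 0 i)^-1 *: c1.
have c'C : c' \in C by rewrite memvZ.
have c'i : c' 0 i = 1 by rewrite mxE mulVf.
have c'P : forall p, p \in P -> c' 0 p = 0.
  by move=> p pP; rewrite mxE (c1P p pP) mulr0.
have c'J : forall p, p \in J -> c' 0 p = 0.
  by move=> p pP; rewrite mxE (c1J p pP) mulr0.
clearbody c'.
pose e' := fun j => if j == i then c' else e j - e j 0 i *: c'.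
have inv' : Inv (i |: J) e'.
  split.
  - by move=> j; rewrite !inE => /orP[/eqP -> //|]; apply: dJ.
  - move=> j; rewrite !inE /e' => /orP[/eqP ->|jJ]; rewrite ?eqxx //.
    by case: eqP => _ //; rewrite memvB ?memvZ ?eC.
  - move=> j p; rewrite !inE /e' => /orP[/eqP ->|jJ] pP; rewrite ?eqxx ?c'P //.
    by case: eqP => _; rewrite ?c'P // !mxE (e0 j p jJ pP) (c'P p pP) mulr0 subrr.
  - move=> j j'; rewrite !inE /e'.
    have ne : forall x, x \in J -> (x == i) = false.
      by move=> x xJ; apply/eqP => ex; move: iJ; rewrite -ex xJ.
    case/orP=> [/eqP ->|jJ]; case/orP=> [/eqP ->|j'J]; rewrite ?eqxx ?c'i //.
    + by rewrite c'J // eq_sym ne.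
    + by rewrite ne // !mxE c'i mulr1 subrr.
    + by rewrite ne // !mxE c'J // mulr0 subr0 ed.
have hb := famX_bound inv'.
apply: (IH _ _ inv'); rewrite cardsU1 iJ /= in hb *.
move: hm hb; rewrite ltnS; move: (\dim C) #|J| #|P| => a b d; lia.
Qed.

End Ext.

Lemma dotFC (x y : cfg) : dotF x y = dotF y x.
Proof. by apply: eq_bigr => j _; rewrite mulrC. Qed.

Lemma dotF_suml (I : finType) (Q : pred I) (a : I -> F) (v : I -> cfg) (c : cfg) :
  dotF (\sum_(j | Q j) a j *: v j) c = \sum_(j | Q j) a j * dotF (v j) c.
Proof.
rewrite /dotF; under eq_bigr do rewrite sum_entry mulr_suml.
rewrite exchange_big /=; apply: eq_bigr => j _; rewrite mulr_sumr.
by apply: eq_bigr => t _; rewrite mulrA.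
Qed.

Lemma dotF_delta (s : 'I_n) (c : cfg) : dotF (delta_mx 0 s) c = c 0 s.
Proof.
rewrite /dotF (bigD1 s) //= mxE !eqxx mul1r big1 ?addr0 // => t ts.
by rewrite mxE (negPf ts) andbF mul0r.
Qed.

Lemma dotFB (x y c : cfg) : dotF (x - y) c = dotF x c - dotF y c.
Proof.
rewrite /dotF -sumrB; apply: eq_bigr => j _; rewrite !mxE mulrBl //.
Qed.

Lemma in_dualP (C2 : {vspace cfg}) (x : cfg) :
  reflect (forall c, c \in C2 -> dotF x c = 0) (in_dual C2 x).
Proof.
apply: (iffP forallP) => [h c cC|h c]; first by move: (h c); rewrite cC => /eqP.
by apply/implyP => cC; rewrite h.
Qed.

Lemma in_dual_sum (C2 : {vspace cfg}) (I : finType) (Q : pred I) (a : I -> F) (v : I -> cfg) :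
  (forall j, Q j -> in_dual C2 (v j)) -> in_dual C2 (\sum_(j | Q j) a j *: v j).
Proof.
move=> h; apply/in_dualP => c cC; rewrite dotF_suml big1 // => j Qj.
by rewrite (in_dualP _ _ (h j Qj)) // mulr0.
Qed.

Section Dual.
Variables (C2 : {vspace cfg}) (Q : {set 'I_n}) (g : 'I_n -> cfg).
Hypothesis gC : forall q, q \in Q -> g q \in C2.
Hypothesis gd : forall q q', q \in Q -> q' \in Q -> g q 0 q' = (q == q')%:R.
Hypothesis grec : forall c, c \in C2 -> c = \sum_(q in Q) c 0 q *: g q.

Definition hv (s : 'I_n) : cfg := delta_mx 0 s - \sum_(q in Q) g q 0 s *: delta_mx 0 q.

Lemma hv_entry s t : hv s 0 t = (s == t)%:R - (if t \in Q then g t 0 s else 0).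
Proof.
rewrite /hv !mxE eqxx /= eq_sym sum_entry; congr (_ - _).
case: (boolP (t \in Q)) => tQ.
  rewrite (bigD1 t) //= mxE !eqxx mulr1 big1 ?addr0 // => q /andP[_ qt].
  by rewrite mxE eq_sym (negPf qt) mulr0.
rewrite big1 // => q qQ; rewrite mxE eqxx /=; case: eqP => [e|]; last by rewrite mulr0.
by move: tQ; rewrite e qQ.
Qed.

Lemma hv_delta s s' : s' \notin Q -> hv s 0 s' = (s == s')%:R.
Proof. by move=> s'Q; rewrite hv_entry (negPf s'Q) subr0. Qed.

Lemma hv_dual s : s \notin Q -> in_dual C2 (hv s).
Proof.
move=> sQ; apply/in_dualP => c cC; rewrite dotFC (grec cC) dotF_suml big1 // => q qQ.
apply/eqP; rewrite mulf_eq0; apply/orP; right; apply/eqP.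
rewrite /dotF; under eq_bigr do rewrite hv_entry mulrBr.
rewrite sumrB (bigD1 s) //= eqxx mulr1 big1 ?addr0; last first.
  by move=> t ts; rewrite eq_sym (negPf ts) mulr0.
rewrite (eq_bigr (fun i => if i \in Q then g q 0 i * g i 0 s else 0)); last by move=> i _; case: ifP; rewrite ?mulr0.
rewrite -big_mkcond /= (bigD1 q) //= (gd qQ qQ) eqxx mul1r big1 ?addr0 ?subrr //.
by move=> t /andP[tQ tq]; rewrite gd // eq_sym (negPf tq) mul0r.
Qed.

Lemma dual_rec x : in_dual C2 x -> x = \sum_(s in ~: Q) x 0 s *: hv s.
Proof.
move=> xd; apply/rowP => t; rewrite sum_entry.
case: (boolP (t \in Q)) => tQ; last first.
  rewrite (bigD1 t) ?inE //= hv_delta // eqxx mulr1 big1 ?addr0 // => s /andP[_ st].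
  by rewrite hv_delta // (negPf st) mulr0.
have := in_dualP _ _ xd _ (gC tQ); rewrite /dotF (bigID (fun j => j \in Q)) /=.
rewrite (bigD1 t) //= gd // eqxx mulr1 big1 ?addr0; last first.
  by move=> j /andP[jQ jt]; rewrite gd // eq_sym (negPf jt) mulr0.
move/eqP; rewrite addr_eq0 => /eqP ->; rewrite -sumrN.
apply: eq_big => [j|j]; first by rewrite inE.
move=> jQ; rewrite hv_entry tQ.
have -> : (j == t) = false by apply/eqP => e; move: jQ; rewrite e tQ.
by rewrite sub0r mulrN.
Qed.

End Dual.

End Piv.


Section Quantum.
Variables (F : finFieldType) (n : nat).
Local Notation cfg := 'rV[F]_n.
Local Notation gate := (gate F n).

Lemma upd_at (y : cfg) a c : upd y a c 0 a = c.
Proof. by rewrite mxE eqxx. Qed.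
Lemma upd_ne (y : cfg) a c j : j != a -> upd y a c 0 j = y 0 j.
Proof. by move=> ja; rewrite mxE (negPf ja). Qed.

Lemma ket_opmx (g : cfg -> cfg -> algC) (y : cfg) :
  ket y *m opmx g = \sum_x g y x *: ket x.
Proof.
rewrite /ket -rowE; apply/rowP => j; rewrite !mxE enum_rankK summxE.
rewrite (bigD1 (enum_val j)) //= !mxE enum_valK !eqxx mulr1 big1 ?addr0 // => x xj.
rewrite !mxE eqxx /=; case: eqP => [e|]; last by rewrite mulr0.
by move: xj; rewrite e enum_rankK eqxx.
Qed.

Lemma ket_opmx_cl (g : cfg -> cfg -> algC) (f : cfg -> cfg) (y : cfg) :
  (forall x, g y x = (x == f y)%:R) -> ket y *m opmx g = ket (f y).
Proof.
move=> hg; rewrite ket_opmx (bigD1 (f y)) //= hg eqxx scale1r big1 ?addr0 // => x xf.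
by rewrite hg (negPf xf) scale0r.
Qed.

Definition cl (g : gate) (y : cfg) : cfg :=
  match g with
  | GM gam a => upd y a (gam * y 0 a)
  | GADD a b => upd y b (y 0 a + y 0 b)
  | GF _ => y
  end.

Lemma ket_gate_cl (g : gate) y : ~~ isF g -> ket y *m gate_mx g = ket (cl g y).
Proof.
case: g => //= [gam a|a b] _.
  exact: (ket_opmx_cl (f := fun y => upd y a (gam * y 0 a))).
exact: (ket_opmx_cl (f := fun y => upd y b (y 0 a + y 0 b))).
Qed.

Definition run (c : seq gate) (y : cfg) := foldl (fun y g => cl g y) y c.

Lemma circuit_cons (g : gate) (c : seq gate) : circuit_mx (g :: c) = gate_mx g *m circuit_mx c.
Proof. by []. Qed.

Lemma circuit_cat (c1 c2 : seq gate) : circuit_mx (c1 ++ c2) = circuit_mx c1 *m circuit_mx c2.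
Proof.
elim: c1 => [|g c1 IH]; first by rewrite /= mul1mx.
by rewrite cat_cons !circuit_cons IH mulmxA.
Qed.

Lemma ket_circ_cl (c : seq gate) (y : cfg) : all (fun g => ~~ isF g) c -> ket y *m circuit_mx c = ket (run c y).
Proof.
elim: c y => [|g c IH] y; first by rewrite /= mulmx1.
by rewrite /= => /andP[gF cF]; rewrite mulmxA ket_gate_cl // IH.
Qed.

Definition kap : algC := omega F ^+ trN (0 : F) / sqrtC (qsz F)%:R.

Lemma ket_F (y : cfg) a : y 0 a = 0 ->
  ket y *m gate_mx (@GF F n a) = kap *: \sum_(c : F) ket (upd y a c).
Proof.
move=> ya; rewrite /= ket_opmx.
have -> : \sum_(x : cfg) ampF a y x *: ket x = \sum_(x : cfg) ((x == upd y a (x 0 a))%:R * kap) *: ket x.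
  by apply: eq_bigr => x _; rewrite /ampF ya mul0r /kap mulrA.
rewrite scaler_sumr (bigID (fun x : cfg => x == upd y a (x 0 a))) /= [X in _ + X]big1 ?addr0; last first.
  by move=> x /negPf ->; rewrite mul0r scale0r.
rewrite (reindex_onto (fun c => upd y a c) (fun x : cfg => x 0 a)) /=; last by move=> x /eqP {2}->.
apply: eq_big => [c|c _]; first by rewrite upd_at !eqxx.
by rewrite upd_at eqxx mul1r.
Qed.

Definition supp_on (s : seq 'I_n) (z : cfg) := [forall j, (j \notin s) ==> (z 0 j == 0)].

Lemma Fstage (s : seq 'I_n) (y : cfg) : uniq s -> (forall a, a \in s -> y 0 a = 0) ->
  ket y *m circuit_mx (map (@GF F n) s) = kap ^+ (size s) *: \sum_(z | supp_on s z) ket (y + z).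
Proof.
elim: s y => [|a s IH] y.
  move=> _ _; rewrite /= mulmx1 expr0 scale1r (bigD1 0) /=; last by apply/forallP => j; rewrite mxE eqxx implybT.
  rewrite addr0 big1 ?addr0 // => z /andP[/forallP h nz]; case/eqP: nz; apply/rowP => j.
  by rewrite mxE; apply/eqP; apply: (implyP (h j)).
case/andP=> as_ us y0.
rewrite map_cons circuit_cons mulmxA ket_F ?y0 ?mem_head // -scalemxAl mulmx_suml.
have -> : \sum_(c : F) ket (upd y a c) *m circuit_mx (map (@GF F n) s) =
          \sum_(c : F) kap ^+ size s *: \sum_(z | supp_on s z) ket (upd y a c + z).
  apply: eq_bigr => c _; apply: IH => // b bs.
  rewrite upd_ne ?y0 ?inE ?bs ?orbT //; apply: contra as_ => /eqP <-; exact: bs.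
rewrite -scaler_sumr scalerA -exprS; congr (_ *: _).
symmetry; rewrite (partition_big (fun z : cfg => z 0 a) predT) //=; apply: eq_bigr => c _.
rewrite (reindex_onto (fun z => upd z a c) (fun z => upd z a 0)) /=; last first.
  move=> z /andP[_ /eqP zc]; apply/rowP => j; rewrite !mxE; case: eqP => // ->; by rewrite zc.
apply: eq_big => [z|z].
  rewrite upd_at eqxx andbT /=.
  apply/idP/idP.
    case/andP=> /forallP h /eqP e; apply/forallP => j; apply/implyP => js.
    case: (eqVneq j a) => [->|ja]; first by rewrite -e !mxE eqxx.
    by move: (h j); rewrite !mxE (negPf ja) inE (negPf ja) js.
  move/forallP => h; apply/andP; split.
    apply/forallP => j; rewrite !mxE inE negb_or; case: eqP => [->|] //=.
  apply/eqP/rowP => j; rewrite !mxE; case: eqP => // ->.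
  by move: (h a); rewrite as_ => /eqP ->.
case/andP=> _ /eqP e; congr ket; apply/rowP => j; rewrite !mxE.
case: eqP => [->|_]; last by [].
by rewrite y0 ?mem_head // add0r -e !mxE eqxx addr0.
Qed.

Lemma upd_upd (y : cfg) t a b : upd (upd y t a) t b = upd y t b.
Proof. by apply/rowP => j; rewrite !mxE; case: eqP. Qed.

Lemma upd_id (y : cfg) t : upd y t (y 0 t) = y.
Proof. by apply/rowP => j; rewrite !mxE; case: eqP => // ->. Qed.

Fixpoint hseq (t : 'I_n) (prev : F) (l : seq ('I_n * F)) : seq gate :=
  match l with
  | [::] => [:: @GM F n prev t]
  | (p, gam) :: l' => @GM F n (prev / gam) t :: @GADD F n p t :: hseq t gam l'
  end.

Definition block (z : bool) (t : 'I_n) (l : seq ('I_n * F)) : seq gate :=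
  match l with
  | [::] => [::]
  | (p, gam) :: l' => (if z then [::] else [:: @GM F n gam^-1 t]) ++ @GADD F n p t :: hseq t gam l'
  end.

Lemma run_cat (c1 c2 : seq gate) y : run (c1 ++ c2) y = run c2 (run c1 y).
Proof. by rewrite /run foldl_cat. Qed.

Definition okl (t : 'I_n) (l : seq ('I_n * F)) := all (fun pg : 'I_n * F => (pg.1 != t) && (pg.2 != 0)) l.

Lemma sum_upd_ne (t : 'I_n) (l : seq ('I_n * F)) (y : cfg) (c : F) : okl t l ->
  \sum_(pg <- l) pg.2 * upd y t c 0 pg.1 = \sum_(pg <- l) pg.2 * y 0 pg.1.
Proof.
move=> ok; apply: eq_big_seq => -[p' g'] /= pl.
move/allP: ok => /(_ _ pl) /andP[/= p't _].
by rewrite upd_ne.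
Qed.

Lemma run_hseq t prev l (y : cfg) : okl t l -> prev != 0 ->
  run (hseq t prev l) y = upd y t (prev * y 0 t + \sum_(pg <- l) pg.2 * y 0 pg.1).
Proof.
elim: l prev y => [|[p gam] l IH] prev y /=.
  by move=> _ _; rewrite big_nil addr0.
case/andP=> /andP[/= pt g0] ok p0.
rewrite /run /= -/(run _ _) IH // !upd_upd !upd_at upd_ne // sum_upd_ne // big_cons /=.
by congr upd; field.
Qed.

Lemma run_block (z : bool) (t : 'I_n) (l : seq ('I_n * F)) (y : cfg) : okl t l -> (z -> y 0 t = 0) ->
  run (block z t l) y = upd y t (y 0 t + \sum_(pg <- l) pg.2 * y 0 pg.1).
Proof.
case: l => [|[p gam] l] /=; first by rewrite big_nil addr0 upd_id.
case/andP=> /andP[/= pt g0] ok hz; rewrite big_cons /=.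
case: z hz => [y0|_] /=.
  rewrite /run /= -/(run _ _) run_hseq // !upd_upd !upd_at sum_upd_ne //.
  by rewrite (y0 isT) addr0 add0r.
rewrite /run /= -/(run _ _) run_hseq // !upd_upd !upd_at upd_ne // sum_upd_ne //.
have -> : gam * (y 0 p + gam^-1 * y 0 t) = y 0 t + gam * y 0 p by field.
by rewrite addrA.
Qed.

Definition blocks z (ts : seq 'I_n) (L : 'I_n -> seq ('I_n * F)) : seq gate :=
  flatten (map (fun t => block z t (L t)) ts).

Lemma run_blocks (z : bool) (ts : seq 'I_n) L (y : cfg) : uniq ts ->
  (forall t, t \in ts -> okl t (L t)) ->
  (forall t pg, t \in ts -> pg \in L t -> pg.1 \notin ts) ->
  (z -> forall t, t \in ts -> y 0 t = 0) ->
  run (blocks z ts L) y = \row_j (if j \in ts then y 0 j + \sum_(pg <- L j) pg.2 * y 0 pg.1 else y 0 j).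
Proof.
elim: ts y => [|t ts IH] y /=.
  by move=> _ _ _ _; apply/rowP => j; rewrite !mxE.
case/andP=> tts uts okL src hz.
rewrite /blocks /= run_cat run_block; last 2 first.
- by apply: okL; rewrite mem_head.
- by move=> zz; apply: hz; rewrite ?mem_head.
rewrite IH //; first last.
- move=> zz t' t'ts; rewrite upd_ne ?hz ?inE ?t'ts ?orbT //.
  by apply: contra tts => /eqP <-.
- by move=> t' pg t'ts pgL; move: (src t' pg); rewrite inE t'ts orbT => /(_ isT pgL); rewrite inE negb_or => /andP[].
- by move=> t' t'ts; apply: okL; rewrite inE t'ts orbT.
apply/rowP => j; rewrite !mxE inE.
have srcne : forall t', t' \in t :: ts -> \sum_(pg <- L t') pg.2 * upd y t (y 0 t + \sum_(pg0 <- L t) pg0.2 * y 0 pg0.1) 0 pg.1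
   = \sum_(pg <- L t') pg.2 * y 0 pg.1.
  move=> t' t'in; apply: eq_big_seq => pg pgL; rewrite upd_ne //.
  by move: (src t' pg t'in pgL); rewrite inE negb_or => /andP[].
case: eqP => [->|jt] /=.
  by rewrite (negPf tts).
case: ifP => jts.
  by rewrite srcne // inE jts orbT.
by [].
Qed.

Definition mkL (A : {set 'I_n}) (f : 'I_n -> F) : seq ('I_n * F) :=
  [seq (i, f i) | i <- enum A & f i != 0].

Lemma mkL_sum (A : {set 'I_n}) (f : 'I_n -> F) (v : cfg) :
  \sum_(pg <- mkL A f) pg.2 * v 0 pg.1 = \sum_(i in A) f i * v 0 i.
Proof.
rewrite big_map big_filter big_enum_cond /=.
rewrite [RHS](bigID (fun i => f i != 0)) /= [X in _ = _ + X]big1 ?addr0 // => i /andP[_].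
by rewrite negbK => /eqP ->; rewrite mul0r.
Qed.

Lemma mkL_size (A : {set 'I_n}) (f : 'I_n -> F) : (size (mkL A f) <= #|A|)%N.
Proof. by rewrite size_map size_filter cardE count_size. Qed.

Lemma mkL_ok (A : {set 'I_n}) (f : 'I_n -> F) t : t \notin A -> okl t (mkL A f).
Proof.
move=> tA; apply/allP => -[p g] /mapP[i]; rewrite mem_filter mem_enum => /andP[fi iA] [-> ->] /=.
rewrite fi andbT; apply: contra tA => /eqP <-; exact: iA.
Qed.

Lemma mkL_src (A : {set 'I_n}) (f : 'I_n -> F) pg : pg \in mkL A f -> pg.1 \in A.
Proof. by case/mapP => i; rewrite mem_filter mem_enum => /andP[_ iA] ->. Qed.

Definition good (g : gate) := gate_wf g && ~~ isF g.

Lemma good_hseq t prev l : okl t l -> prev != 0 -> all good (hseq t prev l).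
Proof.
elim: l prev => [|[p gam] l IH] prev /=; first by rewrite /good /= => _ ->.
case/andP=> /andP[/= pt g0] ok p0; rewrite /good /= pt mulf_neq0 ?invr_eq0 //=.
exact: IH.
Qed.

Lemma good_block z t l : okl t l -> all good (block z t l).
Proof.
case: l => [|[p gam] l] //= /andP[/andP[/= pt g0] ok].
rewrite all_cat; apply/andP; split; first by case: z; rewrite //= /good /= invr_eq0 g0.
by rewrite /= {1}/good /= pt good_hseq.
Qed.

Lemma good_blocks z ts L : (forall t, t \in ts -> okl t (L t)) -> all good (blocks z ts L).
Proof.
rewrite /blocks; elim: ts => [|t ts IH] //= h.
rewrite all_cat good_block ?h ?mem_head //= IH // => t' t'ts.
by apply: h; rewrite inE t'ts orbT.
Qed.

Lemma count_blocks (a : pred gate) z ts L :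
  count a (blocks z ts L) = \sum_(t <- ts) count a (block z t (L t)).
Proof.
rewrite /blocks; elim: ts => [|t ts IH]; first by rewrite big_nil.
by rewrite /= count_cat IH big_cons.
Qed.

Lemma countADD_hseq t prev l : count (@isADD F n) (hseq t prev l) = size l.
Proof. by elim: l prev => [|[p g] l IH] prev //=; rewrite IH. Qed.

Lemma countM_hseq t prev l : count (@isM F n) (hseq t prev l) = (size l).+1.
Proof. by elim: l prev => [|[p g] l IH] prev //=; rewrite IH. Qed.

Lemma countADD_block z t l : count (@isADD F n) (block z t l) = size l.
Proof. by case: l => [|[p g] l] //=; rewrite count_cat /= countADD_hseq; case: z. Qed.

Lemma countM_block z t l :
  count (@isM F n) (block z t l) = (size l + (~~ z && (0 < size l)))%N.
Proof.
case: l => [|[p g] l] /=; first by rewrite andbF.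
rewrite count_cat /= countM_hseq; case: z => /=; lia.
Qed.

End Quantum.


Lemma kap_neq0 (F : finFieldType) : kap F != 0.
Proof.
rewrite /kap mulf_neq0 ?invr_eq0 //.
  rewrite /omega; apply: expf_neq0; apply: expf_neq0.
  by rewrite rootC_eq0 ?pdiv_gt0 // oppr_eq0 oner_eq0.
rewrite sqrtC_eq0 pnatr_eq0 /qsz -lt0n; apply/card_gt0P; by exists 0.
Qed.

Section Main.
Variables (F : finFieldType) (n : nat) (C1 C2 : {vspace 'rV[F]_n}).
Local Notation cfg := 'rV[F]_n.
Hypothesis hD : forall x : cfg, in_dual C2 x -> x \in C1.
Variables (Q : {set 'I_n}) (g : 'I_n -> cfg) (I : {set 'I_n}) (e : 'I_n -> cfg).
Hypothesis gC : forall q, q \in Q -> g q \in C2.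
Hypothesis gd : forall q q', q \in Q -> q' \in Q -> g q 0 q' = (q == q')%:R.
Hypothesis grec : forall c, c \in C2 -> c = \sum_(q in Q) c 0 q *: g q.
Local Notation S := (~: Q).
Local Notation h := (hv Q g).
Hypothesis IQ : forall i, i \in I -> i \in Q.
Hypothesis eC : forall i, i \in I -> e i \in C1.
Hypothesis e0 : forall i s, i \in I -> s \in S -> e i 0 s = 0.
Hypothesis ed : forall i i', i \in I -> i' \in I -> e i 0 i' = (i == i')%:R.
Hypothesis erec : forall c, c \in C1 -> (forall s, s \in S -> c 0 s = 0) -> c = \sum_(i in I) c 0 i *: e i.

Definition T1 := ~: (S :|: I).
Definition L1 (t : 'I_n) := mkL I (fun i => e i 0 t).
Definition L2 (t : 'I_n) := mkL S (fun s => h s 0 t).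
Definition cc1 := blocks true (enum T1) L1.
Definition cc2 := blocks false (enum Q) L2.
Definition cc := map (@GF F n) (enum S) ++ cc1 ++ cc2.

Lemma ok1 t : t \in enum T1 -> okl t (L1 t).
Proof.
rewrite mem_enum !inE negb_or => /andP[_ tI]; exact: mkL_ok.
Qed.

Lemma ok2 t : t \in enum Q -> okl t (L2 t).
Proof. by rewrite mem_enum => tQ; apply: mkL_ok; rewrite inE tQ. Qed.

Lemma run_cl (v : cfg) : (forall t, t \in T1 -> v 0 t = 0) ->
  run (cc1 ++ cc2) v = \sum_(i in I) v 0 i *: e i + \sum_(s in S) v 0 s *: h s.
Proof.
move=> vT; rewrite run_cat.
have v1E : forall j, run cc1 v 0 j = if j \in T1 then v 0 j + \sum_(i in I) e i 0 j * v 0 i else v 0 j.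
  move=> j; rewrite /cc1 (run_blocks (enum_uniq _) (@ok1)); first last.
  - by move=> _ t; rewrite mem_enum; apply: vT.
  - by move=> t pg _ /mkL_src; rewrite !mem_enum !inE negb_or => pI; rewrite pI andbF.
  by rewrite mxE mem_enum /L1 mkL_sum.
move: (run cc1 v) v1E => v1 v1E.
rewrite /cc2 (run_blocks (enum_uniq _) (@ok2)); first last.
- by [].
- by move=> t pg _ /mkL_src; rewrite !mem_enum inE.
apply/rowP => j; rewrite !mxE !sum_entry !mem_enum /L2 mkL_sum.
have v1S : forall s, s \in S -> v1 0 s = v 0 s.
  by move=> s; rewrite inE => sQ; rewrite v1E /T1 !inE sQ.
under eq_bigr => s sS do rewrite v1S //.
rewrite v1E.
case: (boolP (j \in Q)) => jQ.
  have -> : \sum_(s in S) h s 0 j * v 0 s = \sum_(s in S) v 0 s * h s 0 j.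
    by apply: eq_bigr => s _; rewrite mulrC.
  congr (_ + _).
  case: (boolP (j \in T1)) => jT.
    rewrite vT // add0r; apply: eq_bigr => i _; exact: mulrC.
  have jI : j \in I by move: jT; rewrite /T1 !inE negbK jQ /=.
  rewrite (bigD1 j) //= ed // eqxx mulr1 big1 ?addr0 // => i /andP[iI ij].
  by rewrite ed // (negPf ij) mulr0.
have jS : j \in S by rewrite inE.
have -> : j \in T1 = false by rewrite /T1 !inE; rewrite inE in jS; rewrite jS.
rewrite big1 ?add0r; last by move=> i iI; rewrite e0 // mulr0.
rewrite (bigD1 j) //= hv_delta // eqxx mulr1 big1 ?addr0 // => s /andP[_ sj].
by rewrite hv_delta // (negPf sj) mulr0.
Qed.

Definition LS (z : cfg) : cfg := \sum_(s in S) z 0 s *: h s.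
Definition restr (d : cfg) : cfg := \row_t (if t \in S then d 0 t else 0).
Definition Lx (x : cfg) : cfg := \sum_(i in I) x 0 i *: e i.

Lemma LS_dual (z : cfg) : in_dual C2 (LS z).
Proof. by apply: in_dual_sum => s; rewrite inE => sQ; apply: (hv_dual gd grec). Qed.

Lemma restr_LS (z : cfg) : supp_on (enum S) z -> restr (LS z) = z.
Proof.
move=> /forallP zs; apply/rowP => t; rewrite mxE; case: ifP => tS.
  rewrite /LS sum_entry (bigD1 t) //= hv_delta; last by rewrite inE in tS.
  rewrite eqxx mulr1 big1 ?addr0 // => s /andP[_ st].
  by rewrite hv_delta ?(negPf st) ?mulr0 //; rewrite inE in tS.
by apply/esym/eqP; move: (zs t); rewrite mem_enum tS.
Qed.

Lemma LS_restr (d : cfg) : in_dual C2 d -> LS (restr d) = d.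
Proof.
move=> dD; rewrite {2}(dual_rec gC gd dD) /LS; apply: eq_bigr => s sS.
by rewrite mxE sS.
Qed.

Lemma supp_inP (x : cfg) : supp_in I x -> forall j, j \notin I -> x 0 j = 0.
Proof. by move/forallP => h j jI; move: (h j); rewrite jI => /eqP. Qed.

Lemma sumD (x : cfg) : supp_in I x ->
  \sum_(z | supp_on (enum S) z) ket (run (cc1 ++ cc2) (x + z)) =
  \sum_(d | in_dual C2 d) ket (d + Lx x).
Proof.
move=> xI.
have xS : forall s, s \in S -> x 0 s = 0.
  move=> s sS; apply: supp_inP => //; apply/negP => sI.
  by move: sS; rewrite inE IQ.
have -> : \sum_(z | supp_on (enum S) z) ket (run (cc1 ++ cc2) (x + z)) =
          \sum_(z | supp_on (enum S) z) ket (Lx x + LS z).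
  apply: eq_bigr => z /forallP zS; rewrite run_cl; last first.
    move=> t; rewrite /T1 !inE negb_or negbK => /andP[tQ tI].
    rewrite mxE supp_inP // add0r; apply/eqP; move: (zS t); rewrite mem_enum inE tQ //.
  congr ket; congr (_ + _); apply: eq_bigr => i iI; rewrite mxE.
    have : i \notin S by rewrite inE negbK IQ.
    by move=> iS; move: (zS i); rewrite mem_enum iS => /eqP ->; rewrite addr0.
  by rewrite xS // add0r.
rewrite (reindex_onto restr LS); last by move=> z; apply: restr_LS.
apply: eq_big => d.
  apply/idP/idP => [/andP[_ /eqP <-]|dD]; first exact: LS_dual.
  rewrite LS_restr // eqxx andbT; apply/forallP => t; rewrite mem_enum mxE.
  by case: ifP => //= _; rewrite eqxx.
by case/andP=> _ /eqP ->; rewrite addrC.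
Qed.

Lemma cl_good : all (fun g => ~~ isF g) (cc1 ++ cc2).
Proof.
have H : all (@good F n) (cc1 ++ cc2) by rewrite all_cat good_blocks ?good_blocks //; [exact: ok2 | exact: ok1].
by apply: sub_all H => gg /andP[].
Qed.

Lemma ket_U (x : cfg) : supp_in I x ->
  ket x *m circuit_mx cc = kap F ^+ #|S| *: \sum_(d | in_dual C2 d) ket (d + Lx x).
Proof.
move=> xI; rewrite /cc circuit_cat mulmxA Fstage ?enum_uniq //; last first.
  move=> a; rewrite mem_enum inE => aQ; apply: supp_inP => //.
  by apply: contra aQ => /IQ.
rewrite -scalemxAl mulmx_suml -cardE; congr (_ *: _); rewrite -(sumD xI).
by apply: eq_bigr => z _; apply: ket_circ_cl; apply: cl_good.
Qed.

Definition sq : algC := sqrtC (#|[pred y : cfg | in_dual C2 y]|%:R).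

Lemma sq_neq0 : sq != 0.
Proof.
rewrite /sq sqrtC_eq0 pnatr_eq0 -lt0n; apply/card_gt0P; exists 0; rewrite inE.
by apply/in_dualP => c _; rewrite /dotF big1 // => j _; rewrite mxE mul0r.
Qed.

Lemma sum_css (w : cfg) : \sum_(d | in_dual C2 d) ket (d + w) = sq *: css_state C2 w.
Proof. by rewrite /css_state scalerA divff ?sq_neq0 // scale1r. Qed.

Lemma in_dualB (a b : cfg) : in_dual C2 a -> in_dual C2 b -> in_dual C2 (a - b).
Proof.
move=> /in_dualP ha /in_dualP hb; apply/in_dualP => c cC.
by rewrite dotFB ha ?hb ?subrr.
Qed.

Lemma css_shift (w d0 : cfg) : in_dual C2 d0 -> css_state C2 (w + d0) = css_state C2 w.
Proof.
move=> dd; rewrite /css_state; congr (_ *: _).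
rewrite (reindex_inj (can_inj (subrK d0))) /=; apply: eq_big => c.
  apply/idP/idP => hc; last exact: in_dualB.
  rewrite -(subrK d0 c); move: hc dd => /in_dualP ha /in_dualP hb; apply/in_dualP => c' c'C.
  have -> : dotF (c - d0 + d0) c' = dotF (c - d0) c' + dotF d0 c'.
    by rewrite /dotF -big_split; apply: eq_bigr => j _; rewrite mxE mulrDl.
  by rewrite ha ?hb ?addr0.
by move=> _; rewrite addrCA subrK addrC.
Qed.

Lemma Lx_C1 (x : cfg) : Lx x \in C1.
Proof. by rewrite memv_suml // => i iI; rewrite memvZ // eC. Qed.

Lemma span_eq : (input_space F I *m circuit_mx cc :=: css_space C1 C2)%MS.
Proof.
rewrite /input_space; apply: eqmx_trans (sumsmxMr _ _ _) _.
apply/eqmxP/andP; split.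
  apply/sumsmx_subP => x xI; rewrite (eqmxMr _ (genmxE _)) ket_U // sum_css scalerA.
  apply: scalemx_sub; apply: (sumsmx_sup (Lx x)); first exact: Lx_C1.
  by rewrite genmxE.
apply/sumsmx_subP => w wC; rewrite genmxE.
pose w' := w - LS (restr w).
have w'C : w' \in C1 by rewrite memvB // hD // LS_dual.
have w'S : forall s, s \in S -> w' 0 s = 0.
  move=> s sS; rewrite !mxE /LS sum_entry (bigD1 s) //= hv_delta; last by rewrite inE in sS.
  rewrite eqxx mulr1 big1 ?addr0; first by rewrite mxE sS subrr.
  by move=> s' /andP[_ ss]; rewrite hv_delta ?(negPf ss) ?mulr0 //; rewrite inE in sS.
pose y : cfg := \row_t (if t \in I then w' 0 t else 0).
have yI : supp_in I y by apply/forallP => t; rewrite mxE; case: ifP => //= _; rewrite eqxx.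
have Ly : Lx y = w'.
  rewrite [RHS](erec w'C w'S); apply: eq_bigr => i iI; by rewrite mxE iI.
have -> : css_state C2 w = css_state C2 w'.
  by rewrite -(css_shift w' (LS_dual (restr w))) /w' subrK.
have hU : ket y *m circuit_mx cc = (kap F ^+ #|S| * sq) *: css_state C2 w'.
  by rewrite ket_U // sum_css scalerA Ly.
have nz : kap F ^+ #|S| * sq != 0 by rewrite mulf_neq0 ?expf_neq0 ?kap_neq0 ?sq_neq0.
have -> : css_state C2 w' = (kap F ^+ #|S| * sq)^-1 *: (ket y *m circuit_mx cc).
  by rewrite hU scalerA mulVf // scale1r.
apply: scalemx_sub; apply: (sumsmx_sup y) => //.
by rewrite (eqmxMr _ (genmxE _)).
Qed.

Lemma count0 (c : seq (gate F n)) : all (fun g => ~~ isF g) c -> count (@isF F n) c = 0%N.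
Proof. by elim: c => //= gg c IH /andP[/negPf -> /IH ->]. Qed.

Lemma sum_le (s : seq 'I_n) (f : 'I_n -> nat) m : (forall t, f t <= m)%N -> (\sum_(t <- s) f t <= size s * m)%N.
Proof. by move=> hf; elim: s => [|t s IH]; rewrite ?big_nil ?big_cons //= mulSn leq_add. Qed.

Lemma cardT1 : (#|T1| + #|S| + #|I|)%N = n.
Proof.
have dis : S :&: I = set0.
  apply/setP => t; rewrite !inE; case tI: (t \in I); rewrite ?andbF ?andbT //.
  by rewrite IQ.
have cu : #|S :|: I| = (#|S| + #|I|)%N by rewrite cardsU dis cards0 subn0.
by rewrite -addnA -cu /T1 addnC cardsC card_ord.
Qed.

Lemma main_sec : [/\ all (@gate_wf F n) cc, (input_space F I *m circuit_mx cc == css_space C1 C2)%MS,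
  count (@isF F n) cc = #|S|,
  (count (@isADD F n) cc <= #|T1| * #|I| + #|Q| * #|S|)%N &
  (count (@isM F n) cc <= #|T1| * #|I| + #|Q| * (#|S| + (0 < #|S|)))%N].
Proof.
have g12 : all (@good F n) (cc1 ++ cc2) by rewrite all_cat good_blocks ?good_blocks //; [exact: ok2 | exact: ok1].
split.
- rewrite /cc all_cat; apply/andP; split; first by rewrite all_map; apply/allP.
  by apply: sub_all g12 => gg /andP[].
- by apply/eqmxP; apply: span_eq.
- rewrite /cc count_cat (count0 cl_good) addn0 cardE.
  by elim: (enum S) => //= t s ->.
- rewrite /cc !count_cat.
  have -> : count (@isADD F n) (map (@GF F n) (enum S)) = 0%N by elim: (enum S).
  rewrite /cc1 /cc2 !count_blocks add0n; apply: leq_add.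
    under eq_bigr do rewrite countADD_block.
    by rewrite [#|T1|]cardE; apply: sum_le => t; apply: mkL_size.
  under eq_bigr do rewrite countADD_block.
  by rewrite [#|Q|]cardE; apply: sum_le => t; apply: mkL_size.
rewrite /cc !count_cat.
have -> : count (@isM F n) (map (@GF F n) (enum S)) = 0%N by elim: (enum S).
rewrite /cc1 /cc2 !count_blocks add0n; apply: leq_add.
  under eq_bigr do rewrite countM_block /= addn0.
  by rewrite [#|T1|]cardE; apply: sum_le => t; apply: mkL_size.
under eq_bigr do rewrite countM_block /=.
rewrite [#|Q|]cardE; apply: sum_le => t; have := mkL_size S (fun s => h s 0 t).
case: (size _) => [|m] /=; first by rewrite leq0n.
by case: #|S| => // m' hm; rewrite addn1 addn1 ltnS.
Qed.

End Main.

Lemma arith1 (t r a q X n : nat) : (t + r + a = n)%N -> (r + q = n)%N -> (X * 2 = (r + a).+1 * (r + a))%N ->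
  (t * a + q * r <= (r + a) * n - X)%N.
Proof.
move=> h1 h2 h3.
have hr : (r <= r * r)%N by case: r {h1 h2 h3} => // r; rewrite leq_pmulr.
have ha : (a <= a * a)%N by case: a {h1 h2 h3} => // a; rewrite leq_pmulr.
have hq : q = (t + a)%N by lia.
subst q n.
lia.
Qed.
Lemma arith2 (t r a q X n : nat) : (t + r + a = n)%N -> (r + q = n)%N -> (X * 2 = (r + a).+1 * (r + a))%N ->
  (t * a + q * (r + (0 < r)) <= (r + a) * n - X + (n - 1))%N.
Proof.
move=> h1 h2 h3; have := @arith1 t r a q X n h1 h2 h3.
case: r h1 h2 h3 => [|r] h1 h2 h3 /=.
  rewrite addn0 => h; apply: leq_trans h _; exact: leq_addr.
rewrite mulnDr muln1 => h; rewrite addnA; apply: leq_add => //; lia.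
Qed.

Lemma bin2S m : ('C(m.+1, 2) * 2 = m.+1 * m)%N.
Proof.
elim: m => [|m IH] //; rewrite binS bin1 mulnDl IH; lia.
Qed.

Unset Implicit Arguments.
Set Strict Implicit.

Theorem proposition1 (F : finFieldType) (n : nat) (C1 C2 : {vspace 'rV[F]_n}) :
  (forall x : 'rV[F]_n, in_dual C2 x -> x \in C1) ->
  let k1 := \dim C1 in
  let k2 := \dim C2 in
  let k := (k1 + k2 - n)%N in
  let A := (k1 * n - 'C(k1.+1, 2))%N in
  exists (c : seq (gate F n)) (I : {set 'I_n}),
    [/\ all (@gate_wf F n) c,
        #|I| = k &
        (input_space F I *m circuit_mx c == css_space C1 C2)%MS] /\
    [/\ count (@isF F n) c = (n - k2)%N,
        (count (@isADD F n) c <= A)%N &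
        (count (@isM F n) c <= A + (n - 1))%N].
Proof.
move=> hD k1 k2 k A.
have [Q [g [[_ gC _ gd] [cQ grec0]]]] := @ext_lemma F n C2 set0 (fun _ => 0)
   ltac:(by move=> p; rewrite inE) ltac:(by move=> p p'; rewrite inE).
have grec : forall c, c \in C2 -> c = \sum_(q in Q) c 0 q *: g q.
  by move=> c cC; apply: grec0 => // p; rewrite inE.
have wC1 : forall s, s \in ~: Q -> hv Q g s \in C1.
  by move=> s; rewrite inE => sQ; apply: hD; apply: (hv_dual gd grec).
have wd1 : forall s s', s \in ~: Q -> s' \in ~: Q -> hv Q g s 0 s' = (s == s')%:R.
  by move=> s s' _; rewrite inE => s'Q; apply: hv_delta.
have [I [e [[dI eC e0 ed] [cI erec]]]] := @ext_lemma F n C1 (~: Q) (hv Q g) wC1 wd1.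
have IQ : forall i, i \in I -> i \in Q by move=> i iI; move: (dI i iI); rewrite inE negbK.
have [wf sp cF cA cM] := main_sec hD gC gd grec IQ eC e0 ed erec.
have ct := cardT1 IQ.
have cS : (#|~: Q| + #|Q|)%N = n by rewrite addnC cardsC card_ord.
rewrite cards0 add0n in cQ.
have b2 := bin2S k1.
exists (cc Q g I e), I; split; first split => //.
  rewrite /k /k1 /k2 -cI -cQ; lia.
rewrite /A; split.
- by rewrite cF /k2 -cQ; lia.
- apply: (leq_trans cA); rewrite /k1 -cI; rewrite /k1 -cI in b2.
  exact: arith1 ct cS b2.
- apply: (leq_trans cM); rewrite /k1 -cI; rewrite /k1 -cI in b2.
  exact: arith2 ct cS b2.
Qed.
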